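(* Let $\mathbb{Z}$ be a finite-dimensional real inner product space, $\theta:\mathbb{Z}\to(-\infty,+\infty]$ proper lower semicontinuous, $h:\mathbb{Z}\to\mathbb{R}$ continuous, $\Delta\subseteq\mathbb{Z}$ nonempty closed, and consider $$(\mathrm{MP})\ \min_{z}\{\theta(z): h(z)=0,\ z\in\Delta\},\qquad (\mathrm{EPMP}_\mu)\ \min_z\{\theta(z)+\mu|h(z)|:\ z\in\Delta\}\ (\mu>0),$$ where $(\mathrm{MP})$ has a nonempty global optimal solution set $\mathcal{F}^*$ and optimal value $v^*(\mathrm{MP})$. Then: (a) $(\mathrm{MP})$ is uniformly partially calm over $\mathcal{F}^*$ if and only if $(\mathrm{EPMP}_\mu)$ is a global exact penalty of $(\mathrm{MP})$. (b) If $\theta$ is coercive or $\Delta$ is compact, then partial calmness of $(\mathrm{MP})$ over $\mathcal{F}^*$ implies that $(\mathrm{EPMP}_\mu)$ is a global exact penalty of $(\mathrm{MP})$.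
   Context: $(\mathrm{MP})$ is uniformly partially calm over $\mathcal{F}^*$ if there exists $\mu>0$ such that $\theta(z)-v^*(\mathrm{MP})+\mu|h(z)|\ge0$ for all $z\in\Delta$. Letting $\mathbb{B}$ be the closed unit ball and $\mathcal{F}_\epsilon:=\{z\in\Delta:h(z)=\epsilon\}$, $(\mathrm{MP})$ is partially calm at $z^*\in\mathcal{F}^*$ if there exist $\varepsilon>0,\mu>0$ such that for all $\epsilon\in[-\varepsilon,\varepsilon]$ and all $z\in(z^*+\varepsilon\mathbb{B})\cap\mathcal{F}_\epsilon$, $\theta(z)-\theta(z^* )+\mu|h(z)|\ge0$; it is partially calm over $\mathcal{F}^*$ if partially calm at each point of $\mathcal{F}^*$. $(\mathrm{EPMP}_\mu)$ is a global exact penalty of $(\mathrm{MP})$ if there exists $\bar\mu>0$ such that for every $\mu>\bar\mu$ the set of global optimal solutions of $(\mathrm{EPMP}_\mu)$ coincides with $\mathcal{F}^*$. *)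

(* Defs.v *)
From Stdlib Require Fin.
From Stdlib Require Import Reals List.
Open Scope R_scope.

(* ---------- extended reals (-oo,+oo] : None = +oo ---------- *)
Definition ER := option R.

Definition Ele (a b : ER) : Prop :=
  match a, b with
  | _, None => True
  | None, Some _ => False
  | Some x, Some y => x <= y
  end.

Definition Elt (a b : ER) : Prop :=
  match a, b with
  | None, _ => False
  | Some _, None => True
  | Some x, Some y => x < y
  end.

Definition Eaddr (a : ER) (r : R) : ER :=
  match a with None => None | Some x => Some (x + r) end.

Definition Vec (n : nat) := Fin.t n -> R.

Fixpoint fsum (n : nat) : (Fin.t n -> R) -> R :=
  match n with
  | O => fun _ => 0
  | S m => fun f => f Fin.F1 + fsum m (fun i => f (Fin.FS i))
  end.

Definition inner {n} (x y : Vec n) : R := fsum n (fun i => x i * y i).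
Definition vnorm {n} (x : Vec n) : R := sqrt (inner x x).
Definition vsub {n} (x y : Vec n) : Vec n := fun i => x i - y i.

Definition is_open {n} (U : Vec n -> Prop) : Prop :=
  forall x, U x -> exists r, 0 < r /\ forall z, vnorm (vsub z x) < r -> U z.

Definition is_closed {n} (D : Vec n -> Prop) : Prop :=
  is_open (fun z => ~ D z).

Definition is_compact {n} (D : Vec n -> Prop) : Prop :=
  forall (I : Type) (U : I -> Vec n -> Prop),
    (forall i, is_open (U i)) ->
    (forall z, D z -> exists i, U i z) ->
    exists l : list I, forall z, D z -> exists i, In i l /\ U i z.

(* proper: never -oo (built into the type) and not identically +oo *)
Definition proper_fun {n} (theta : Vec n -> ER) : Prop :=
  exists z, theta z <> None.

Definition lsc {n} (theta : Vec n -> ER) : Prop :=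
  forall x (a : R), Elt (Some a) (theta x) ->
    exists d, 0 < d /\ forall z, vnorm (vsub z x) < d -> Elt (Some a) (theta z).

Definition continuous_fun {n} (h : Vec n -> R) : Prop :=
  forall x eps, 0 < eps ->
    exists d, 0 < d /\ forall z, vnorm (vsub z x) < d -> Rabs (h z - h x) < eps.

Definition coercive {n} (theta : Vec n -> ER) : Prop :=
  forall M : R, exists r, forall z, r < vnorm z -> Ele (Some M) (theta z).

Section Problems.
Context {n : nat} (theta : Vec n -> ER) (h : Vec n -> R) (Delta : Vec n -> Prop).

Definition MP_feasible (z : Vec n) : Prop := Delta z /\ h z = 0.

Definition MP_opt (z : Vec n) : Prop :=
  MP_feasible z /\ forall z', MP_feasible z' -> Ele (theta z) (theta z').

Definition pen_obj (mu : R) (z : Vec n) : ER := Eaddr (theta z) (mu * Rabs (h z)).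

Definition EPMP_opt (mu : R) (z : Vec n) : Prop :=
  Delta z /\ forall z', Delta z' -> Ele (pen_obj mu z) (pen_obj mu z').

(* uniform partial calmness over F^*, with vstar = v^*(MP):
   theta(z) - v^* + mu |h(z)| >= 0 written as v^* <= theta(z) + mu|h(z)| *)
Definition unif_partially_calm (vstar : R) : Prop :=
  exists mu, 0 < mu /\ forall z, Delta z -> Ele (Some vstar) (pen_obj mu z).

Definition partially_calm_at (zs : Vec n) : Prop :=
  exists eps mu, 0 < eps /\ 0 < mu /\
    forall e, -eps <= e <= eps ->
    forall z, vnorm (vsub z zs) <= eps -> Delta z -> h z = e ->
      Ele (theta zs) (pen_obj mu z).

Definition partially_calm_over_Fstar : Prop :=
  forall zs, MP_opt zs -> partially_calm_at zs.

Definition global_exact_penalty : Prop :=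
  exists mubar, 0 < mubar /\
    forall mu, mubar < mu -> forall z, EPMP_opt mu z <-> MP_opt z.

End Problems.

(* Main.v *)
Require Import Defs.
From Stdlib Require Import Reals List.
From Stdlib Require Import Lra Lia Classical ClassicalEpsilon.
From Stdlib Require Import Rtopology.
Open Scope R_scope.

Lemma abs_le_inv x d : Rabs x <= d -> -d <= x <= d.
Proof. unfold Rabs; destruct (Rcase_abs x); lra. Qed.
Lemma abs_lt_inv x d : Rabs x < d -> -d < x < d.
Proof. unfold Rabs; destruct (Rcase_abs x); lra. Qed.

Lemma fsum_nonneg n (f : Fin.t n -> R) : (forall i, 0 <= f i) -> 0 <= fsum n f.
Proof.
  revert f; induction n as [|n IH]; intros f Hf; simpl; [lra|].
  specialize (IH (fun i => f (Fin.FS i)) (fun i => Hf _)). specialize (Hf Fin.F1). lra.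
Qed.

Lemma fsum_ge_term n (f : Fin.t n -> R) i : (forall j, 0 <= f j) -> f i <= fsum n f.
Proof.
  revert f i; induction n as [|n IH]; intros f i Hf.
  - apply (Fin.case0 (fun _ => _) i).
  - apply (Fin.caseS' i (fun i => f i <= fsum (S n) f)); simpl.
    + pose proof (fsum_nonneg n (fun i => f (Fin.FS i)) (fun i => Hf _)). lra.
    + intro p. pose proof (IH (fun i => f (Fin.FS i)) p (fun i => Hf _)).
      pose proof (Hf Fin.F1). simpl in *; lra.
Qed.

Lemma fsum_ext n (f g : Fin.t n -> R) : (forall i, f i = g i) -> fsum n f = fsum n g.
Proof.
  revert f g; induction n as [|n IH]; intros f g H; simpl; [reflexivity|].
  rewrite H, (IH (fun i => f (Fin.FS i)) (fun i => g (Fin.FS i))); auto.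
Qed.

Lemma fsum_box n (f : Fin.t n -> R) d : (forall i, Rabs (f i) <= d) ->
  fsum n (fun i => f i * f i) <= INR n * (d * d).
Proof.
  revert f; induction n as [|n IH]; intros f H; [simpl; lra|].
  rewrite S_INR; cbn [fsum].
  pose proof (IH (fun i => f (Fin.FS i)) (fun i => H _)).
  pose proof (abs_le_inv _ _ (H Fin.F1)).
  nra.
Qed.

Lemma coord_le n (v : Vec n) i : Rabs (v i) <= vnorm v.
Proof.
  unfold vnorm, inner.
  rewrite <- (sqrt_square (Rabs (v i)) (Rabs_pos _)).
  apply sqrt_le_1_alt.
  assert (Rabs (v i) * Rabs (v i) = v i * v i).
  { rewrite <- Rabs_mult. apply Rabs_right. nra. }
  rewrite H. apply (fsum_ge_term n (fun i => v i * v i)). intro; nra.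
Qed.

Lemma sqrt_le_of a b : 0 <= b -> a <= b * b -> sqrt a <= b.
Proof.
  intros Hb H. rewrite <- (sqrt_square b Hb). apply sqrt_le_1_alt; exact H.
Qed.

Lemma cs2 x y P Q : 0 <= P -> 0 <= Q -> x * x <= P -> y * y <= Q ->
  x * y + sqrt (P - x*x) * sqrt (Q - y*y) <= sqrt P * sqrt Q.
Proof.
  intros HP HQ Hx Hy.
  set (A := sqrt (P - x*x)). set (B := sqrt (Q - y*y)).
  assert (HA : A * A = P - x*x) by (apply sqrt_sqrt; lra).
  assert (HB : B * B = Q - y*y) by (apply sqrt_sqrt; lra).
  assert (0 <= A) by apply sqrt_pos. assert (0 <= B) by apply sqrt_pos.
  rewrite <- sqrt_mult by lra.
  destruct (Rle_lt_dec (x*y + A*B) 0). { pose proof (sqrt_pos (P*Q)); lra. }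
  rewrite <- (sqrt_square (x*y + A*B)) by lra.
  apply sqrt_le_1_alt.
  replace P with (x*x + A*A) by lra. replace Q with (y*y + B*B) by lra.
  pose proof (Rle_0_sqr (x*B - A*y)). unfold Rsqr in *. nra.
Qed.

Lemma minkowski n (a b : Fin.t n -> R) :
  sqrt (fsum n (fun i => (a i + b i) * (a i + b i))) <=
  sqrt (fsum n (fun i => a i * a i)) + sqrt (fsum n (fun i => b i * b i)).
Proof.
  revert a b; induction n as [|n IH]; intros a b; simpl.
  - rewrite sqrt_0; lra.
  - specialize (IH (fun i => a (Fin.FS i)) (fun i => b (Fin.FS i))).
    set (x := a Fin.F1) in *. set (y := b Fin.F1) in *.
    set (SA := fsum n (fun i => a (Fin.FS i) * a (Fin.FS i))) in *.
    set (SB := fsum n (fun i => b (Fin.FS i) * b (Fin.FS i))) in *.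
    set (SC := fsum n (fun i => (a (Fin.FS i) + b (Fin.FS i)) * (a (Fin.FS i) + b (Fin.FS i)))) in *.
    assert (0 <= SA) by (apply fsum_nonneg; intro i; cbv beta; nra).
    assert (0 <= SB) by (apply fsum_nonneg; intro i; cbv beta; nra).
    assert (0 <= SC) by (apply fsum_nonneg; intro i; apply Rle_0_sqr).
    pose proof (cs2 x y (x*x+SA) (y*y+SB)) as Hcs.
    replace (x*x+SA - x*x) with SA in Hcs by ring.
    replace (y*y+SB - y*y) with SB in Hcs by ring.
    assert (HA : sqrt SA * sqrt SA = SA) by (apply sqrt_sqrt; lra).
    assert (HB : sqrt SB * sqrt SB = SB) by (apply sqrt_sqrt; lra).
    assert (HC : sqrt SC * sqrt SC = SC) by (apply sqrt_sqrt; lra).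
    assert (HP : sqrt (x*x+SA) * sqrt (x*x+SA) = x*x+SA) by (apply sqrt_sqrt; nra).
    assert (HQ : sqrt (y*y+SB) * sqrt (y*y+SB) = y*y+SB) by (apply sqrt_sqrt; nra).
    pose proof (sqrt_pos SA). pose proof (sqrt_pos SB). pose proof (sqrt_pos SC).
    pose proof (sqrt_pos (x*x+SA)). pose proof (sqrt_pos (y*y+SB)).
    apply sqrt_le_of. nra.
    assert (Hcs' : x*y + sqrt SA * sqrt SB <= sqrt (x*x+SA) * sqrt (y*y+SB)) by (apply Hcs; nra).
    assert (SC <= (sqrt SA + sqrt SB) * (sqrt SA + sqrt SB)) by nra.
    nra.
Qed.

Lemma triangle n (a b c : Vec n) :
  vnorm (vsub a c) <= vnorm (vsub a b) + vnorm (vsub b c).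
Proof.
  unfold vnorm, inner, vsub.
  pose proof (minkowski n (fun i => a i - b i) (fun i => b i - c i)) as H.
  rewrite (fsum_ext n (fun i => (a i - c i) * (a i - c i))
     (fun i => (a i - b i + (b i - c i)) * (a i - b i + (b i - c i)))) by (intro; ring).
  exact H.
Qed.

Lemma inc_mono (phi : nat -> nat) : (forall k, (phi k < phi (S k))%nat) ->
  forall a b, (a < b)%nat -> (phi a < phi b)%nat.
Proof.
  intros H a b; induction b as [|b IH]; intro Hab; [lia|].
  destruct (Nat.eq_dec a b) as [->|Hne]; [apply H|].
  specialize (H b). assert (a < b)%nat by lia. specialize (IH H0). lia.
Qed.

Lemma inc_ge (phi : nat -> nat) : (forall k, (phi k < phi (S k))%nat) ->
  forall k, (k <= phi k)%nat.
Proof.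
  intros H k; induction k as [|k IH]; [lia|]. specialize (H k). lia.
Qed.

Lemma bw1 (u : nat -> R) M : (forall k, Rabs (u k) <= M) ->
  exists (phi : nat -> nat) l, (forall k, (phi k < phi (S k))%nat) /\
   forall eps, 0 < eps -> exists N, forall k, (N <= k)%nat -> Rabs (u (phi k) - l) < eps.
Proof.
  intro HM.
  destruct (Bolzano_Weierstrass u (fun c => -M <= c <= M) (compact_P3 (-M) M)) as [l Hl].
  { intro k; apply abs_le_inv; auto. }
  assert (Hex : forall m k : nat, exists p, (m < p)%nat /\ Rabs (u p - l) < / (INR k + 1)).
  { intros m k.
    assert (H : 0 < / (INR k + 1)) by (apply Rinv_0_lt_compat; pose proof (pos_INR k); lra).
    destruct (Hl (disc l (mkposreal _ H)) (S m)) as [p [Hp Hd]].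
    { exists (mkposreal _ H). unfold included; auto. }
    exists p; split; [lia|]. exact Hd. }
  set (g := fun m k => proj1_sig (constructive_indefinite_description _ (Hex m k))).
  assert (Hg : forall m k, (m < g m k)%nat /\ Rabs (u (g m k) - l) < / (INR k + 1)).
  { intros m k. exact (proj2_sig (constructive_indefinite_description _ (Hex m k))). }
  set (phi := fix f k := match k with O => g O O | S k' => g (f k') (S k') end).
  exists phi, l. split.
  - intro k. simpl. apply Hg.
  - intros eps He. destruct (INR_unbounded (/eps)) as [N HN]. exists N. intros k Hk.
    assert (Hk' : Rabs (u (phi k) - l) < / (INR k + 1)) by (destruct k; simpl; apply Hg).
    assert (H1 : eps * INR N > 1).
    { apply (Rmult_lt_compat_l eps) in HN; [|lra]. rewrite Rinv_r in HN; lra. }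
    apply le_INR in Hk. pose proof (pos_INR N).
    assert (Hv : / (INR k + 1) * (INR k + 1) = 1) by (field; lra).
    assert (0 < / (INR k + 1)) by (apply Rinv_0_lt_compat; lra).
    assert (/ (INR k + 1) < eps) by nra. lra.
Qed.

Lemma bwn n (z : nat -> Vec n) M : (forall k i, Rabs (z k i) <= M) ->
  exists (phi : nat -> nat) (l : Vec n), (forall k, (phi k < phi (S k))%nat) /\
   forall eps, 0 < eps -> exists N, forall k, (N <= k)%nat ->
     forall i, Rabs (z (phi k) i - l i) < eps.
Proof.
  revert z; induction n as [|n IHn]; intros z HM.
  - exists (fun k => k), (z O). split; [intro; lia|].
    intros eps He; exists O; intros k _ i; apply (Fin.case0 (fun _ => _) i).
  - destruct (IHn (fun k i => z k (Fin.FS i)) ltac:(intros; apply HM)) as [phi1 [lt [H1 C1]]].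
    destruct (bw1 (fun k => z (phi1 k) Fin.F1) M ltac:(intros; apply HM)) as [phi2 [l0 [H2 C2]]].
    exists (fun k => phi1 (phi2 k)), (fun i => Fin.caseS' i (fun _ => R) l0 lt). split.
    + intro k. apply inc_mono; auto.
    + intros eps He. destruct (C1 eps He) as [N1 HN1]. destruct (C2 eps He) as [N2 HN2].
      exists (max N1 N2). intros k Hk i.
      apply (Fin.caseS' i (fun i => Rabs (z (phi1 (phi2 k)) i - Fin.caseS' i (fun _ => R) l0 lt) < eps)).
      * simpl. apply HN2; lia.
      * intro p. simpl. apply HN1. pose proof (inc_ge phi2 H2 k). lia.
Qed.

Lemma coord_to_norm n (w : nat -> Vec n) (l : Vec n) :
  (forall eps, 0 < eps -> exists N, forall k, (N <= k)%nat -> forall i, Rabs (w k i - l i) < eps) ->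
  forall eps, 0 < eps -> exists N, forall k, (N <= k)%nat -> vnorm (vsub (w k) l) < eps.
Proof.
  intros H eps He. pose proof (pos_INR n).
  set (d := eps / (INR n + 1)).
  assert (Hd : d * (INR n + 1) = eps) by (unfold d; field; lra).
  assert (Hd0 : 0 < d) by (unfold d; apply Rdiv_lt_0_compat; lra).
  destruct (H d Hd0) as [N HN]. exists N. intros k Hk.
  assert (Hb : inner (vsub (w k) l) (vsub (w k) l) <= INR n * (d * d)).
  { apply (fsum_box n (vsub (w k) l) d). intro i. unfold vsub. left; apply HN; auto. }
  unfold vnorm. rewrite <- (sqrt_square eps) by lra.
  apply sqrt_lt_1_alt. split.
  - apply fsum_nonneg. intro i. apply Rle_0_sqr.
  - nra.
Qed.

Lemma compact_bounded n (D : Vec n -> Prop) : is_compact D ->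
  exists M, forall z, D z -> forall i, Rabs (z i) <= M.
Proof.
  intro HC.
  set (zero := fun _ : Fin.t n => 0).
  destruct (HC nat (fun k z => vnorm (vsub z zero) < INR k)) as [L HL].
  - intros k x Hx. exists (INR k - vnorm (vsub x zero)). split; [lra|].
    intros z Hz. pose proof (triangle n z x zero). lra.
  - intros z _. destruct (INR_unbounded (vnorm (vsub z zero))) as [k Hk]. exists k; lra.
  - exists (INR (list_max L)). intros z Dz i.
    destruct (HL z Dz) as [k [Hk Hz]].
    assert (k <= list_max L)%nat.
    { assert (Hf : Forall (fun k => (k <= list_max L)%nat) L) by (apply list_max_le; lia).
      rewrite Forall_forall in Hf. auto. }
    apply le_INR in H. pose proof (coord_le n (vsub z zero) i).
    assert (Rabs (z i) = Rabs (vsub z zero i)) by (unfold vsub, zero; rewrite Rminus_0_r; auto). lra.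
Qed.

Lemma arch A : exists K, forall k, (K <= k)%nat -> A < INR k.
Proof.
  destruct (INR_unbounded A) as [K HK]. exists K. intros k Hk. apply le_INR in Hk. lra.
Qed.

Lemma pen_feas n (theta : Vec n -> ER) h mu z v :
  h z = 0 -> theta z = Some v -> pen_obj theta h mu z = Some v.
Proof.
  intros Hh Ht. unfold pen_obj, Eaddr. rewrite Ht, Hh, Rabs_R0, Rmult_0_r, Rplus_0_r. auto.
Qed.

Lemma part_a n (theta : Vec n -> ER) h Delta vstar :
  (exists z, MP_opt theta h Delta z) ->
  (forall z, MP_opt theta h Delta z -> theta z = Some vstar) ->
  (unif_partially_calm theta h Delta vstar <-> global_exact_penalty theta h Delta).
Proof.
  intros [zs Hzs] Hval. pose proof (Hval zs Hzs) as Hts.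
  destruct Hzs as [[Dzs hzs] Hopt].
  split.
  - intros [mu0 [Hmu0 Hc]]. exists mu0. split; [exact Hmu0|].
    intros mu Hmu z. split.
    + intros [Dz Hmin]. specialize (Hmin zs Dzs). rewrite (pen_feas n theta h mu zs vstar hzs Hts) in Hmin.
      specialize (Hc z Dz). unfold pen_obj, Eaddr in *.
      destruct (theta z) as [t|] eqn:Et; [|contradiction].
      simpl in Hmin, Hc.
      assert (Hh : Rabs (h z) = 0).
      { pose proof (Rabs_pos (h z)). nra. }
      assert (hz : h z = 0).
      { destruct (Req_dec (h z) 0) as [E|E]; auto. apply Rabs_no_R0 in E. contradiction. }
      split; [split; auto|].
      intros z' Hf'. pose proof (Hopt z' Hf') as H'. rewrite Hts in H'.
      destruct (theta z'); simpl in *; rewrite Et; simpl; auto. rewrite Hh, Rmult_0_r in Hmin. lra.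
    + intros Hz. pose proof (Hval z Hz) as Htz. destruct Hz as [[Dz hz] _].
      split; [exact Dz|]. intros z' Dz'.
      rewrite (pen_feas n theta h mu z vstar hz Htz).
      specialize (Hc z' Dz'). unfold pen_obj, Eaddr in *.
      destruct (theta z'); simpl in *; auto.
      pose proof (Rabs_pos (h z')). nra.
  - intros [mub [Hmub Hp]]. exists (mub + 1). split; [lra|].
    intros z Dz.
    assert (He : EPMP_opt theta h Delta (mub + 1) zs).
    { apply (Hp (mub+1)); [lra|]. split; [split; auto|exact Hopt]. }
    destruct He as [_ Hmin]. specialize (Hmin z Dz).
    rewrite (pen_feas n theta h (mub+1) zs vstar hzs Hts) in Hmin. exact Hmin.
Qed.

Lemma part_b n (theta : Vec n -> ER) h Delta vstar :
  lsc theta -> continuous_fun h -> is_closed Delta ->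
  (exists z, MP_opt theta h Delta z) ->
  (forall z, MP_opt theta h Delta z -> theta z = Some vstar) ->
  (coercive theta \/ is_compact Delta) ->
  partially_calm_over_Fstar theta h Delta -> unif_partially_calm theta h Delta vstar.
Proof.
  intros Hlsc Hcont Hcl [zs Hzs] Hval Hcase Hpc.
  pose proof (Hval zs Hzs) as Hts. destruct Hzs as [[Dzs hzs] Hopt].
  assert (Hlow : forall z', MP_feasible h Delta z' -> Ele (Some vstar) (theta z')).
  { intros z' Hf. rewrite <- Hts. apply Hopt; auto. }
  apply NNPP; intro Hnot.
  assert (Hex : forall k : nat, exists p : Vec n * R, Delta (fst p) /\ theta (fst p) = Some (snd p)
     /\ snd p + (INR k + 1) * Rabs (h (fst p)) < vstar).
  { intro k. apply NNPP; intro Hk. apply Hnot. exists (INR k + 1).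
    split; [pose proof (pos_INR k); lra|].
    intros z Dz. unfold pen_obj, Eaddr. destruct (theta z) as [t|] eqn:Et; simpl; auto.
    destruct (Rle_lt_dec vstar (t + (INR k + 1) * Rabs (h z))) as [Hle|Hlt]; auto.
    exfalso; apply Hk; exists (z, t); simpl; auto. }
  set (zt := fun k => proj1_sig (constructive_indefinite_description _ (Hex k))).
  set (z := fun k => fst (zt k)). set (t := fun k => snd (zt k)).
  assert (Hz : forall k, Delta (z k) /\ theta (z k) = Some (t k)
      /\ t k + (INR k + 1) * Rabs (h (z k)) < vstar).
  { intro k. exact (proj2_sig (constructive_indefinite_description _ (Hex k))). }
  assert (Htk : forall k, t k < vstar).
  { intro k; destruct (Hz k) as [_ [_ H]]; pose proof (pos_INR k);
    pose proof (Rabs_pos (h (z k))); nra. }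
  assert (HB : exists M, forall k i, Rabs (z k i) <= M).
  { destruct Hcase as [Hco|Hcp].
    - destruct (Hco vstar) as [r Hr]. exists r. intros k i. pose proof (coord_le n (z k) i).
      destruct (Rle_lt_dec (vnorm (z k)) r) as [Hle|Hlt]; [lra|]. exfalso.
      specialize (Hr _ Hlt). destruct (Hz k) as [_ [E _]]. rewrite E in Hr. simpl in Hr.
      specialize (Htk k). lra.
    - destruct (compact_bounded n Delta Hcp) as [M HM]. exists M. intros k i. apply HM. apply Hz. }
  destruct HB as [M HM].
  destruct (bwn n z M HM) as [phi [l [Hinc Hco]]].
  pose proof (coord_to_norm n (fun k => z (phi k)) l Hco) as Hnorm. cbv beta in Hnorm.
  pose proof (inc_ge phi Hinc) as Hge.
  assert (Hzp : forall k, Delta (z (phi k)) /\ theta (z (phi k)) = Some (t (phi k)) /\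
      t (phi k) + (INR k + 1) * Rabs (h (z (phi k))) < vstar).
  { intro k. destruct (Hz (phi k)) as [A [B C]]. repeat split; auto.
    pose proof (le_INR _ _ (Hge k)); pose proof (Rabs_pos (h (z (phi k)))); nra. }
  assert (Dl : Delta l).
  { apply NNPP; intro Hn. destruct (Hcl l Hn) as [r [Hr Hr2]].
    destruct (Hnorm r Hr) as [N HN]. apply (Hr2 (z (phi N))); [apply HN; lia|apply Hzp]. }
  assert (Hlb : exists a d, 0 < d /\ forall w, vnorm (vsub w l) < d -> Elt (Some a) (theta w)).
  { destruct (theta l) as [tl|] eqn:El.
    - exists (tl - 1). apply Hlsc. rewrite El. simpl; lra.
    - exists 0. apply Hlsc. rewrite El. simpl; auto. }
  destruct Hlb as [a [d [Hd Ha]]].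
  assert (HA : forall k, vnorm (vsub (z (phi k)) l) < d ->
     a < t (phi k) /\ (INR k + 1) * Rabs (h (z (phi k))) < vstar - a).
  { intros k Hk. specialize (Ha _ Hk). destruct (Hzp k) as [_ [E C]]. rewrite E in Ha.
    simpl in Ha. split; lra. }
  assert (hl : h l = 0).
  { destruct (Req_dec (h l) 0) as [E|E]; auto. exfalso.
    pose proof (Rabs_pos_lt _ E) as Hc.
    destruct (Hcont l (Rabs (h l) / 2)) as [d2 [Hd2 Hh2]]; [lra|].
    destruct (Hnorm (Rmin d d2)) as [N HN]; [apply Rmin_pos; lra|].
    destruct (arch (2 * (vstar - a) / Rabs (h l))) as [K HK].
    set (k := max N K).
    assert (Hk : vnorm (vsub (z (phi k)) l) < Rmin d d2) by (apply HN; lia).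
    pose proof (Rmin_l d d2). pose proof (Rmin_r d d2).
    destruct (HA k) as [HA1 HA2]; [lra|].
    specialize (Hh2 (z (phi k)) ltac:(lra)).
    pose proof (Rabs_triang_inv (h l) (h (z (phi k)))).
    rewrite Rabs_minus_sym in Hh2.
    specialize (HK k ltac:(lia)).
    assert (INR k * Rabs (h l) > 2*(vstar - a)).
    { replace (2*(vstar-a)) with ((2*(vstar-a)/Rabs (h l)) * Rabs (h l)) by (field; lra).
      apply Rmult_lt_compat_r; lra. }
    pose proof (pos_INR k). pose proof (Rabs_pos (h (z (phi k)))).
    assert (Rabs (h (z (phi k))) > Rabs (h l) / 2) by lra.
    nra. }
  assert (Hlv : exists tl, theta l = Some tl /\ tl <= vstar).
  { apply NNPP; intro Hn.
    assert (Hel : Elt (Some vstar) (theta l)).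
    { destruct (theta l) as [tl|]; simpl; auto. destruct (Rle_lt_dec tl vstar); auto.
      exfalso; apply Hn; exists tl; auto. }
    destruct (Hlsc l vstar Hel) as [d3 [Hd3 H3]].
    destruct (Hnorm d3 Hd3) as [N HN].
    specialize (H3 (z (phi N)) (HN N (le_n N))).
    destruct (Hzp N) as [_ [E _]]. rewrite E in H3. simpl in H3. specialize (Htk (phi N)). lra. }
  destruct Hlv as [tl [Etl Htl]].
  assert (Hlopt : MP_opt theta h Delta l).
  { split; [split; auto|]. intros z' Hf. specialize (Hlow z' Hf). rewrite Etl.
    destruct (theta z'); simpl in *; auto; lra. }
  pose proof (Hval l Hlopt) as Ev.
  destruct (Hpc l Hlopt) as [eps [mu [He [Hmu Hcalm]]]].
  destruct (Hnorm (Rmin d eps)) as [N HN]; [apply Rmin_pos; lra|].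
  destruct (arch mu) as [K1 HK1]. destruct (arch ((vstar - a) / eps)) as [K2 HK2].
  set (k := max N (max K1 K2)).
  assert (Hk : vnorm (vsub (z (phi k)) l) < Rmin d eps) by (apply HN; lia).
  pose proof (Rmin_l d eps). pose proof (Rmin_r d eps).
  destruct (HA k) as [HA1 HA2]; [lra|].
  specialize (HK1 k ltac:(lia)). specialize (HK2 k ltac:(lia)).
  assert (INR k * eps > vstar - a).
  { replace (vstar - a) with (((vstar - a)/eps) * eps) by (field; lra).
    apply Rmult_lt_compat_r; lra. }
  pose proof (pos_INR k). pose proof (Rabs_pos (h (z (phi k)))).
  assert (Hhe : Rabs (h (z (phi k))) < eps) by nra.
  destruct (Hzp k) as [Dk [Ek Ck]].
  pose proof (abs_le_inv _ _ (Rlt_le _ _ Hhe)) as Hb.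
  specialize (Hcalm (h (z (phi k))) Hb (z (phi k)) ltac:(lra) Dk eq_refl).
  rewrite Ev in Hcalm. unfold pen_obj, Eaddr in Hcalm. rewrite Ek in Hcalm. simpl in Hcalm.
  nra.
Qed.

Theorem proposition2p1 (n : nat) (theta : Vec n -> ER) (h : Vec n -> R)
  (Delta : Vec n -> Prop) (vstar : R) :
  proper_fun theta -> lsc theta -> continuous_fun h ->
  (exists z, Delta z) -> is_closed Delta ->
  (exists z, MP_opt theta h Delta z) ->
  (forall z, MP_opt theta h Delta z -> theta z = Some vstar) ->
  (unif_partially_calm theta h Delta vstar <-> global_exact_penalty theta h Delta) /\
  ((coercive theta \/ is_compact Delta) ->
     partially_calm_over_Fstar theta h Delta -> global_exact_penalty theta h Delta).
Proof.
  intros Hp Hlsc Hc Hne Hcl Hex Hval.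
  split.
  - apply part_a; auto.
  - intros Hcase Hpc. apply (proj1 (part_a n theta h Delta vstar Hex Hval)).
    apply part_b; auto.
Qed.
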